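(* Under the hypotheses of Theorem 1 (stated in the context), with probability one there exists $n_0$ such that for all $n\ge n_0$, denoting by $\hat m_{n,1}<\dots<\hat m_{n,r-1}$ the local minimizers of $\hat f_n$ in $(a,b)$ and by $F$ the distribution function of $P$, $$d_P(\widehat{\mathscr C}_n,\mathscr C_0)=\sum_{j=1}^{r-1}\bigl|F(\hat m_{n,j})-F(m_j)\bigr|.$$
   Context: Hypotheses: $P$ is a probability distribution on $\mathbb R$ with density $f$, $f=0$ outside $[a,b]$ ($a<b$), $f|_{[a,b]}$ is three times continuously differentiable on $[a,b]$, $f'(a)\ne0$, $f'(b)\ne0$, $f$ has finitely many critical points in $(a,b)$, all with $f''\neq0$; $m_1<\dots<m_{r-1}$ are the local minimizers of $f$ in $(a,b)$. $(\hat f_n)$ are random functions, each twice continuously differentiable on $[a,b]$, with $\sup_{[a,b]}|\hat f_n^{(j)}-f^{(j)}|\to0$ almost surely for $j=1,2$. Modal clustering induced by $g$: if $g$ has finitely many local minimizers $\mu_1<\dots<\mu_k$ in $(a,b)$, it is $\{(-\infty,\mu_1),(\mu_1,\mu_2),\dots,(\mu_k,\infty)\}$; $\mathscr C_0$ and $\widehat{\mathscr C}_n$ are those induced by $f$ and $\hat f_n$. For $P$-clusterings $\mathscr C=\{C_1,\dots,C_r\}$, $\mathscr D=\{D_1,\dots,D_s\}$ with $r\le s$, put $C_i=\varnothing$ for $r<i\le s$ and $d_P(\mathscr C,\mathscr D)=\frac12\min_\sigma\sum_{i=1}^sP(C_i\triangle D_{\sigma(i)})$ over permutations $\sigma$ of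 $\{1,\dots,s\}$. *)

(* Defs.v *)
From Stdlib Require Import Reals Lra List Sorted ClassicalEpsilon.
Import ListNotations.
Open Scope R_scope.

(* Riemann integral of g over [u,v]; 0 if g is not Riemann integrable there
   (for all uses below the integrand is integrable). *)
Definition Rint (g : R -> R) (u v : R) : R :=
  match excluded_middle_informative (inhabited (Riemann_integrable g u v)) with
  | left h => RiemannInt (epsilon h (fun _ => True))
  | right _ => 0
  end.

(* Probability of a set A under the law with density f vanishing off [a,b]. *)
Definition Prob (f : R -> R) (a b : R) (A : R -> Prop) : R :=
  Rint (fun x => match excluded_middle_informative (A x) with
                 | left _ => f x | right _ => 0 end) a b.

Definition distr_fun (f : R -> R) (a b : R) (x : R) : R :=
  Prob f a b (fun y => y <= x).

Definition symdiff (A B : R -> Prop) : R -> Prop :=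
  fun x => (A x /\ ~ B x) \/ (B x /\ ~ A x).

(* one-sided-at-endpoints derivative within [a,b] *)
Definition deriv_on (g g' : R -> R) (a b : R) : Prop :=
  forall x, a <= x <= b -> forall eps, 0 < eps -> exists delta, 0 < delta /\
    forall h, h <> 0 -> Rabs h < delta -> a <= x + h <= b ->
      Rabs ((g (x + h) - g x) / h - g' x) < eps.

Definition cont_on (g : R -> R) (a b : R) : Prop :=
  forall x, a <= x <= b -> forall eps, 0 < eps -> exists delta, 0 < delta /\
    forall y, a <= y <= b -> Rabs (y - x) < delta -> Rabs (g y - g x) < eps.

Definition is_local_min (g : R -> R) (x : R) : Prop :=
  exists delta, 0 < delta /\ forall y, Rabs (y - x) < delta -> g x <= g y.

(* Modal clustering induced by the sorted list mu1 < ... < muk of local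
   minimizers: (-oo,mu1), (mu1,mu2), ..., (muk, +oo). *)
Fixpoint clusters_from (lo : option R) (mu : list R) : list (R -> Prop) :=
  match mu with
  | [] => [fun x => match lo with None => True | Some l => l < x end]
  | m :: mu' =>
      (fun x => (match lo with None => True | Some l => l < x end) /\ x < m)
        :: clusters_from (Some m) mu'
  end.

Definition modal_clustering (mu : list R) : list (R -> Prop) :=
  clusters_from None mu.

Fixpoint inserts {A : Type} (x : A) (l : list A) : list (list A) :=
  match l with
  | [] => [[x]]
  | y :: l' => (x :: y :: l') :: map (cons y) (inserts x l')
  end.

Fixpoint perms {A : Type} (l : list A) : list (list A) :=
  match l with
  | [] => [[]]
  | x :: l' => flat_map (inserts x) (perms l')
  end.

Definition sumR (l : list R) : R := fold_right Rplus 0 l.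
Definition minR (l : list R) : R := fold_right Rmin (hd 0 l) l.

Definition pad (n : nat) (C : list (R -> Prop)) : list (R -> Prop) :=
  C ++ repeat (fun _ => False) (n - length C).

Definition dP (f : R -> R) (a b : R) (C D : list (R -> Prop)) : R :=
  let s := Nat.max (length C) (length D) in
  let C' := pad s C in
  let D' := pad s D in
  / 2 * minR (map (fun D'' =>
                     sumR (map (fun p => Prob f a b (symdiff (fst p) (snd p)))
                               (combine C' D'')))
                  (perms D')).

(* Main.v *)
Require Import Defs.
From Stdlib Require Import Reals Lra Lia List Sorted ClassicalEpsilon Classical FunctionalExtensionality.
From Coquelicot Require Import Coquelicot.
Import ListNotations.
Open Scope R_scope.

Lemma cpt_of (g : R -> R) x :
  (forall eps, 0 < eps -> exists d, 0 < d /\ forall y, Rabs (y - x) < d -> Rabs (g y - g x) < eps) ->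
  continuity_pt g x.
Proof.
  intros H. unfold continuity_pt, continue_in, limit1_in, limit_in.
  intros eps He. destruct (H eps He) as [d [Hd H']]. exists d. split; [lra|].
  intros y [_ Hy]. simpl in *. unfold R_dist in *. apply H'. exact Hy.
Qed.

Lemma cpt_to (g : R -> R) x : continuity_pt g x ->
  forall eps, 0 < eps -> exists d, 0 < d /\ forall y, Rabs (y - x) < d -> Rabs (g y - g x) < eps.
Proof.
  unfold continuity_pt, continue_in, limit1_in, limit_in. intros H eps He.
  destruct (H eps He) as [d [Hd H']]. exists d. split; [lra|].
  intros y Hy. destruct (Req_dec y x) as [->|Hne].
  - rewrite Rminus_diag, Rabs_R0; lra.
  - apply (H' y). split; [split; [exact I| congruence] | exact Hy].
Qed.

Definition clamp (a b x : R) := Rmax a (Rmin b x).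

Lemma clamp_in a b x : a <= b -> a <= clamp a b x <= b.
Proof. intros. unfold clamp, Rmax, Rmin. repeat destruct Rle_dec; lra. Qed.

Lemma clamp_id a b x : a <= x <= b -> clamp a b x = x.
Proof. intros. unfold clamp, Rmax, Rmin. repeat destruct Rle_dec; lra. Qed.

Lemma clamp_lip a b x y : a <= b -> Rabs (clamp a b y - clamp a b x) <= Rabs (y - x).
Proof.
  intros. unfold clamp, Rmax, Rmin. repeat destruct Rle_dec;
  unfold Rabs; repeat destruct Rcase_abs; lra.
Qed.

Lemma clamp_mono a b x y : a <= b -> x <= y -> clamp a b x <= clamp a b y.
Proof. intros. unfold clamp, Rmax, Rmin. repeat destruct Rle_dec; lra. Qed.

Lemma deriv_cont g g' a b : deriv_on g g' a b -> cont_on g a b.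
Proof.
  intros H x Hx eps He.
  destruct (H x Hx 1 Rlt_0_1) as [d [Hd Hd']].
  set (K := Rabs (g' x) + 1).
  assert (HK : 0 < K) by (unfold K; pose proof (Rabs_pos (g' x)); lra).
  exists (Rmin d (eps / K)). split.
  { apply Rmin_glb_lt; [lra| apply Rdiv_lt_0_compat; lra]. }
  intros y Hy Hyx.
  destruct (Req_dec y x) as [->|Hne]. { rewrite Rminus_diag, Rabs_R0; lra. }
  set (h := y - x). assert (Hh : h <> 0) by (unfold h; lra).
  assert (Hhd : Rabs h < d) by (unfold h; eapply Rlt_le_trans; [exact Hyx| apply Rmin_l]).
  assert (Hhe : Rabs h < eps / K) by (unfold h; eapply Rlt_le_trans; [exact Hyx| apply Rmin_r]).
  specialize (Hd' h Hh Hhd). replace (x + h) with y in Hd' by (unfold h; ring).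
  specialize (Hd' Hy).
  assert (E : g y - g x = ((g y - g x) / h - g' x) * h + g' x * h) by (field; exact Hh).
  rewrite E. eapply Rle_lt_trans. apply Rabs_triang. rewrite !Rabs_mult.
  assert (Rabs h * K < eps).
  { apply (Rmult_lt_compat_r K) in Hhe; [|exact HK].
    replace (eps / K * K) with eps in Hhe by (field; lra). exact Hhe. }
  unfold K in H0. pose proof (Rabs_pos h). nra.
Qed.

Lemma cont_clamp g a b : a <= b -> cont_on g a b ->
  forall x, continuity_pt (fun y => g (clamp a b y)) x.
Proof.
  intros Hab H x. apply cpt_of. intros eps He.
  destruct (H (clamp a b x) (clamp_in a b x Hab) eps He) as [d [Hd Hd']].
  exists d. split; [exact Hd|]. intros y Hy.
  apply Hd'. apply clamp_in; exact Hab.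
  eapply Rle_lt_trans; [apply clamp_lip; exact Hab| exact Hy].
Qed.

Lemma cpt_continuous g x : continuity_pt g x -> continuous g x.
Proof. intros H. apply continuity_pt_filterlim. exact H. Qed.

Lemma deriv_interior g g' a b x : deriv_on g g' a b -> a < x < b -> derivable_pt_lim g x (g' x).
Proof.
  intros H Hx eps He.
  destruct (H x (conj (Rlt_le _ _ (proj1 Hx)) (Rlt_le _ _ (proj2 Hx))) eps He) as [d [Hd Hd']].
  assert (Hp : 0 < Rmin d (Rmin (x - a) (b - x))).
  { repeat apply Rmin_glb_lt; lra. }
  exists (mkposreal _ Hp). intros h Hh Hhd. simpl in Hhd.
  apply Hd'; [exact Hh| |].
  - eapply Rlt_le_trans; [exact Hhd| apply Rmin_l].
  - pose proof (Rmin_r d (Rmin (x - a) (b - x))). pose proof (Rmin_l (x-a) (b-x)).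
    pose proof (Rmin_r (x-a) (b-x)). revert Hhd. unfold Rabs; destruct Rcase_abs; lra.
Qed.

Lemma strict_incr g g' a b u v : deriv_on g g' a b -> a < u -> u < v -> v < b ->
  (forall x, u < x < v -> 0 < g' x) -> g u < g v.
Proof.
  intros H Hu Huv Hv Hpos.
  destruct (MVT_cor2 g g' u v Huv) as [c [Hc1 Hc2]].
  { intros c Hc. apply (deriv_interior g g' a b); [exact H| lra]. }
  specialize (Hpos c Hc2). nra.
Qed.

Lemma strict_decr g g' a b u v : deriv_on g g' a b -> a < u -> u < v -> v < b ->
  (forall x, u < x < v -> g' x < 0) -> g v < g u.
Proof.
  intros H Hu Huv Hv Hneg.
  destruct (MVT_cor2 g g' u v Huv) as [c [Hc1 Hc2]].
  { intros c Hc. apply (deriv_interior g g' a b); [exact H| lra]. }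
  specialize (Hneg c Hc2). nra.
Qed.

Lemma deriv_quot g g' a b c : deriv_on g g' a b -> a < c < b -> g' c <> 0 ->
  exists d, 0 < d /\ a < c - d /\ c + d < b /\
    forall h, h <> 0 -> Rabs h < d -> Rabs ((g (c + h) - g c) / h - g' c) < Rabs (g' c) / 2.
Proof.
  intros H Hc Hne.
  assert (Hp : 0 < Rabs (g' c) / 2) by (pose proof (Rabs_pos_lt _ Hne); lra).
  destruct (H c (conj (Rlt_le _ _ (proj1 Hc)) (Rlt_le _ _ (proj2 Hc))) _ Hp) as [d [Hd Hd']].
  set (d' := Rmin d (Rmin (c - a) (b - c)) / 2).
  pose proof (Rmin_l d (Rmin (c - a) (b - c))). pose proof (Rmin_r d (Rmin (c - a) (b - c))).
  pose proof (Rmin_l (c-a) (b-c)). pose proof (Rmin_r (c-a) (b-c)).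
  assert (0 < Rmin d (Rmin (c - a) (b - c))) by (repeat apply Rmin_glb_lt; lra).
  exists d'. unfold d'. repeat split; try lra.
  intros h Hh Hhd. apply Hd'; [exact Hh| lra|].
  revert Hhd. unfold Rabs; destruct Rcase_abs; lra.
Qed.

Lemma sign_pos_right g g' a b c : deriv_on g g' a b -> a < c < b -> g c = 0 -> 0 < g' c ->
  exists d, 0 < d /\ a < c - d /\ c + d < b /\
    (forall x, c < x < c + d -> 0 < g x) /\ (forall x, c - d < x < c -> g x < 0).
Proof.
  intros H Hc H0 Hp.
  destruct (deriv_quot g g' a b c H Hc (Rgt_not_eq _ _ Hp)) as [d [Hd [Hd1 [Hd2 Hq]]]].
  exists d. repeat split; try lra.
  - intros x Hx. specialize (Hq (x - c) ltac:(lra)). replace (c + (x - c)) with x in Hq by ring.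
    assert (Habs : Rabs (x - c) < d) by (rewrite Rabs_right; lra). specialize (Hq Habs).
    rewrite H0, Rminus_0_r, (Rabs_right (g' c)) in Hq by lra.
    apply Rabs_def2 in Hq. destruct Hq as [_ Hq].
    assert (0 < g x / (x - c)) by lra.
    replace (g x) with (g x / (x - c) * (x - c)) by (field; lra). nra.
  - intros x Hx. specialize (Hq (x - c) ltac:(lra)). replace (c + (x - c)) with x in Hq by ring.
    assert (Habs : Rabs (x - c) < d) by (rewrite Rabs_left; lra). specialize (Hq Habs).
    rewrite H0, Rminus_0_r, (Rabs_right (g' c)) in Hq by lra.
    apply Rabs_def2 in Hq. destruct Hq as [_ Hq].
    assert (0 < g x / (x - c)) by lra.
    replace (g x) with (g x / (x - c) * (x - c)) by (field; lra). nra.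
Qed.

Lemma sign_neg_right g g' a b c : deriv_on g g' a b -> a < c < b -> g c = 0 -> g' c < 0 ->
  exists d, 0 < d /\ a < c - d /\ c + d < b /\
    (forall x, c < x < c + d -> g x < 0) /\ (forall x, c - d < x < c -> 0 < g x).
Proof.
  intros H Hc H0 Hp.
  destruct (deriv_quot g g' a b c H Hc (Rlt_not_eq _ _ Hp)) as [d [Hd [Hd1 [Hd2 Hq]]]].
  exists d. repeat split; try lra.
  - intros x Hx. specialize (Hq (x - c) ltac:(lra)). replace (c + (x - c)) with x in Hq by ring.
    assert (Habs : Rabs (x - c) < d) by (rewrite Rabs_right; lra). specialize (Hq Habs).
    rewrite H0, Rminus_0_r, (Rabs_left (g' c)) in Hq by lra.
    apply Rabs_def2 in Hq. destruct Hq as [Hq _].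
    assert (g x / (x - c) < 0) by lra.
    replace (g x) with (g x / (x - c) * (x - c)) by (field; lra). nra.
  - intros x Hx. specialize (Hq (x - c) ltac:(lra)). replace (c + (x - c)) with x in Hq by ring.
    assert (Habs : Rabs (x - c) < d) by (rewrite Rabs_left; lra). specialize (Hq Habs).
    rewrite H0, Rminus_0_r, (Rabs_left (g' c)) in Hq by lra.
    apply Rabs_def2 in Hq. destruct Hq as [Hq _].
    assert (g x / (x - c) < 0) by lra.
    replace (g x) with (g x / (x - c) * (x - c)) by (field; lra). nra.
Qed.

Lemma local_min_d0 g g' a b c : deriv_on g g' a b -> a < c < b -> is_local_min g c -> g' c = 0.
Proof.
  intros H Hc [dl [Hdl Hl]].
  destruct (Req_dec (g' c) 0) as [E|Hne]; [exact E| exfalso].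
  destruct (deriv_quot g g' a b c H Hc Hne) as [d [Hd [Hd1 [Hd2 Hq]]]].
  set (h := Rmin d dl / 2).
  assert (0 < Rmin d dl) by (apply Rmin_glb_lt; lra).
  pose proof (Rmin_l d dl). pose proof (Rmin_r d dl).
  destruct (Rlt_or_le 0 (g' c)) as [Hp|Hn].
  - specialize (Hq (- h) ltac:(unfold h; lra)). rewrite Rabs_Ropp, Rabs_right in Hq by (unfold h; lra).
    specialize (Hq ltac:(unfold h; lra)). rewrite (Rabs_right (g' c)) in Hq by lra.
    apply Rabs_def2 in Hq. destruct Hq as [_ Hq].
    assert (Hm := Hl (c + - h)). rewrite Rabs_left in Hm by (unfold h; lra).
    specialize (Hm ltac:(unfold h; lra)).
    assert (0 < (g (c + - h) - g c) / - h) by lra.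
    assert (E : g (c + - h) - g c = (g (c + - h) - g c) / - h * - h) by (field; unfold h; lra).
    assert (0 < h) by (unfold h; lra). nra.
  - assert (Hn' : g' c < 0) by lra.
    specialize (Hq h ltac:(unfold h; lra)). rewrite Rabs_right in Hq by (unfold h; lra).
    specialize (Hq ltac:(unfold h; lra)). rewrite (Rabs_left (g' c)) in Hq by lra.
    apply Rabs_def2 in Hq. destruct Hq as [Hq _].
    assert (Hm := Hl (c + h)). rewrite Rabs_right in Hm by (unfold h; lra).
    specialize (Hm ltac:(unfold h; lra)).
    assert ((g (c + h) - g c) / h < 0) by lra.
    assert (E : g (c + h) - g c = (g (c + h) - g c) / h * h) by (field; unfold h; lra).
    assert (0 < h) by (unfold h; lra). nra.
Qed.

Lemma local_min_d2 g g' g'' a b c : deriv_on g g' a b -> deriv_on g' g'' a b -> a < c < b ->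
  is_local_min g c -> ~ g'' c < 0.
Proof.
  intros H1 H2 Hc Hm Hneg.
  pose proof (local_min_d0 g g' a b c H1 Hc Hm) as E.
  destruct Hm as [dl [Hdl Hl]].
  destruct (sign_neg_right g' g'' a b c H2 Hc E Hneg) as [d [Hd [Hd1 [Hd2 [Hs _]]]]].
  set (h := Rmin d dl / 2).
  assert (0 < Rmin d dl) by (apply Rmin_glb_lt; lra).
  pose proof (Rmin_l d dl). pose proof (Rmin_r d dl).
  assert (g (c + h) < g c).
  { apply (strict_decr g g' a b c (c + h) H1); try (unfold h; lra). intros x Hx. apply Hs. unfold h in Hx; lra. }
  assert (g c <= g (c + h)). { apply Hl. rewrite Rabs_right; unfold h; lra. }
  lra.
Qed.

Lemma d2_local_min g g' g'' a b c : deriv_on g g' a b -> deriv_on g' g'' a b -> a < c < b ->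
  g' c = 0 -> 0 < g'' c -> is_local_min g c.
Proof.
  intros H1 H2 Hc E Hp.
  destruct (sign_pos_right g' g'' a b c H2 Hc E Hp) as [d [Hd [Hd1 [Hd2 [Hs1 Hs2]]]]].
  exists d. split; [exact Hd|]. intros y Hy.
  destruct (Rtotal_order y c) as [Hlt|[Heq|Hgt]].
  - rewrite Rabs_left in Hy by lra.
    apply Rlt_le, (strict_decr g g' a b y c H1); try lra. intros x Hx; apply Hs2; lra.
  - subst; lra.
  - rewrite Rabs_right in Hy by lra.
    apply Rlt_le, (strict_incr g g' a b c y H1); try lra. intros x Hx; apply Hs1; lra.
Qed.

Ltac clt := unfold clamp, Rmax, Rmin in *; repeat destruct Rle_dec; try lra.

Definition fc (a b : R) (f : R -> R) x := f (clamp a b x).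
Definition Phi (a b : R) (f : R -> R) x := RInt (fc a b f) a x.

Lemma fc_cont a b f : a <= b -> cont_on f a b -> forall x, continuous (fc a b f) x.
Proof. intros. apply cpt_continuous. apply cont_clamp; assumption. Qed.

Lemma fc_ex a b f u v : a <= b -> cont_on f a b -> ex_RInt (fc a b f) u v.
Proof. intros. apply (@ex_RInt_continuous R_CompleteNormedModule). intros; apply fc_cont; assumption. Qed.

Lemma Phi_diff a b f u v : a <= b -> cont_on f a b -> Phi a b f v - Phi a b f u = RInt (fc a b f) u v.
Proof.
  intros. unfold Phi. rewrite <- (RInt_Chasles (fc a b f) a u v) by (apply fc_ex; assumption).
  change (plus (RInt (fc a b f) a u) (RInt (fc a b f) u v)) with
    (RInt (fc a b f) a u + RInt (fc a b f) u v). ring.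
Qed.

Lemma Phi_mono a b f u v : a <= b -> cont_on f a b -> (forall x, 0 <= f x) -> u <= v ->
  Phi a b f u <= Phi a b f v.
Proof.
  intros. assert (0 <= RInt (fc a b f) u v).
  { apply RInt_ge_0; [assumption| apply fc_ex; assumption| intros; unfold fc; auto]. }
  rewrite <- Phi_diff in H3 by assumption. lra.
Qed.

Lemma Phi_lip a b f : a <= b -> cont_on f a b -> (forall x, 0 <= f x) ->
  exists M, 0 < M /\ forall u v, Rabs (Phi a b f v - Phi a b f u) <= M * Rabs (v - u).
Proof.
  intros Hab Hc Hp.
  destruct (continuity_ab_maj (fc a b f) a b Hab) as [Mx [HM _]].
  { intros. apply cont_clamp; assumption. }
  assert (Hb : forall t, Rabs (fc a b f t) <= fc a b f Mx + 1).
  { intros t. rewrite Rabs_right by (apply Rle_ge; unfold fc; auto).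
    assert (fc a b f t = fc a b f (clamp a b t)).
    { unfold fc. rewrite (clamp_id a b (clamp a b t)); [reflexivity| apply clamp_in; exact Hab]. }
    rewrite H. pose proof (HM (clamp a b t) (clamp_in a b t Hab)). lra. }
  assert (0 <= fc a b f Mx) by (unfold fc; auto).
  exists (fc a b f Mx + 1). split; [lra|].
  intros u v. rewrite Phi_diff by assumption.
  destruct (Rle_or_lt u v) as [Huv|Huv].
  - rewrite (Rabs_right (v - u)) by lra.
    pose proof (abs_RInt_le_const (fc a b f) u v (fc a b f Mx + 1) Huv (fc_ex a b f u v Hab Hc)
      (fun t _ => Hb t)). nra.
  - rewrite (Rabs_left (v - u)) by lra.
    rewrite <- (opp_RInt_swap (fc a b f) v u) by (apply fc_ex; assumption).
    change (opp (RInt (fc a b f) v u)) with (- RInt (fc a b f) v u). rewrite Rabs_Ropp.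
    pose proof (abs_RInt_le_const (fc a b f) v u (fc a b f Mx + 1) (Rlt_le _ _ Huv) (fc_ex a b f v u Hab Hc)
      (fun t _ => Hb t)). nra.
Qed.

Definition gI (f : R -> R) (A : R -> Prop) (x : R) : R :=
  match excluded_middle_informative (A x) with left _ => f x | right _ => 0 end.

Lemma Prob_gI f a b A : Prob f a b A = Rint (gI f A) a b.
Proof. reflexivity. Qed.

Lemma Rint_of_is g a b v : is_RInt g a b v -> Rint g a b = v.
Proof.
  intros H. unfold Rint. destruct excluded_middle_informative as [h|h].
  - rewrite <- RInt_Reals. apply is_RInt_unique; exact H.
  - exfalso. apply h. constructor. apply ex_RInt_Reals_0. exists v; exact H.
Qed.

Lemma Prob_of_is f a b A v : is_RInt (gI f A) a b v -> Prob f a b A = v.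
Proof. intros; apply Rint_of_is; assumption. Qed.

Lemma Prob_nonneg f a b A : a <= b -> (forall x, 0 <= f x) -> 0 <= Prob f a b A.
Proof.
  intros Hab Hp. rewrite Prob_gI. unfold Rint. destruct excluded_middle_informative as [h|h]; [|lra].
  rewrite <- RInt_Reals. apply RInt_ge_0; [exact Hab| |].
  - apply ex_RInt_Reals_1. apply (epsilon h (fun _ => True)).
  - intros. unfold gI. destruct excluded_middle_informative; auto; lra.
Qed.

Lemma Prob_ext f a b A B : (forall x, A x <-> B x) -> Prob f a b A = Prob f a b B.
Proof.
  intros H. rewrite !Prob_gI. f_equal. apply functional_extensionality. intros x.
  unfold gI. destruct excluded_middle_informative as [h|h]; destruct excluded_middle_informative as [h'|h'];
    auto; exfalso; firstorder.
Qed.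

Definition lowc (lo : option R) x := match lo with None => True | Some l => l < x end.
Definition highc (hi : option R) x := match hi with None => True | Some h => x < h end.
Definition iv lo hi x := lowc lo x /\ highc hi x.
Definition cll a b (lo : option R) := match lo with None => a | Some u => clamp a b u end.
Definition clh a b (hi : option R) := match hi with None => b | Some u => clamp a b u end.
Definition V a b f lo hi := Phi a b f (Rmax (cll a b lo) (clh a b hi)) - Phi a b f (cll a b lo).

Lemma is_RInt_zero_ext g u v : u <= v -> (forall x, u < x < v -> g x = 0) -> is_RInt g u v 0.
Proof.
  intros Huv H. apply (is_RInt_ext (fun _ => 0)).
  { intros x Hx. rewrite Rmin_left, Rmax_right in Hx by lra. symmetry; apply H; exact Hx. }
  pose proof (is_RInt_const u v 0). change (scal (v - u) 0) with ((v - u) * 0) in H0.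
  rewrite Rmult_0_r in H0. exact H0.
Qed.

Lemma iv_is a b f lo hi : a < b ->  cont_on f a b ->
  is_RInt (gI f (iv lo hi)) a b (V a b f lo hi).
Proof.
  intros Hab Hc. unfold V.
  set (L := cll a b lo). set (H := clh a b hi). set (H' := Rmax L H).
  assert (HL : a <= L <= b) by (unfold L; destruct lo; simpl; [apply clamp_in|]; lra).
  assert (HH : a <= H <= b) by (unfold H; destruct hi; simpl; [apply clamp_in|]; lra).
  assert (HH' : L <= H' <= b) by (unfold H'; clt).
  assert (E : Phi a b f H' - Phi a b f L = plus (plus 0 (Phi a b f H' - Phi a b f L)) 0).
  { change (plus (plus 0 (Phi a b f H' - Phi a b f L)) 0) with (0 + (Phi a b f H' - Phi a b f L) + 0). ring. }
  assert (P1 : is_RInt (gI f (iv lo hi)) a L 0).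
  { apply is_RInt_zero_ext; [lra|]. intros x Hx. unfold gI.
    destruct excluded_middle_informative as [[h1 h2]|h]; [exfalso|reflexivity].
    unfold L in *. destruct lo; simpl in *; clt. }
  assert (P2 : is_RInt (gI f (iv lo hi)) L H' (Phi a b f H' - Phi a b f L)).
  { rewrite Phi_diff by (try lra; exact Hc). apply (is_RInt_ext (fc a b f)).
    + intros x Hx. rewrite Rmin_left, Rmax_right in Hx by lra. unfold gI.
      destruct excluded_middle_informative as [h|h].
      * unfold fc. rewrite clamp_id by lra. reflexivity.
      * exfalso. apply h. unfold H', L, H in *. split; [destruct lo|destruct hi]; simpl in *; clt.
    + apply (@RInt_correct R_CompleteNormedModule). apply fc_ex; [lra| exact Hc]. }
  assert (P3 : is_RInt (gI f (iv lo hi)) H' b 0).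
  { apply is_RInt_zero_ext; [lra|]. intros x Hx. unfold gI.
    destruct excluded_middle_informative as [[h1 h2]|h]; [exfalso|reflexivity].
    unfold H', L, H in *. destruct hi; simpl in *; clt. }
  rewrite E. exact (@is_RInt_Chasles R_NormedModule _ a H' b _ _ (@is_RInt_Chasles R_NormedModule _ a L H' _ _ P1 P2) P3).
Qed.

Definition omax (o1 o2 : option R) := match o1, o2 with
  | None, o => o | o, None => o | Some u, Some v => Some (Rmax u v) end.
Definition omin (o1 o2 : option R) := match o1, o2 with
  | None, o => o | o, None => o | Some u, Some v => Some (Rmin u v) end.

Lemma iv_inter lo1 hi1 lo2 hi2 x : iv (omax lo1 lo2) (omin hi1 hi2) x <-> iv lo1 hi1 x /\ iv lo2 hi2 x.
Proof.
  unfold iv, omax, omin. destruct lo1, lo2, hi1, hi2; simpl; unfold Rmax, Rmin;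
  repeat destruct Rle_dec; split; intros; intuition lra.
Qed.

Lemma cll_omax a b lo1 lo2 : a <= b -> cll a b (omax lo1 lo2) = Rmax (cll a b lo1) (cll a b lo2).
Proof. intros. destruct lo1, lo2; simpl; clt. Qed.
Lemma clh_omin a b hi1 hi2 : a <= b -> clh a b (omin hi1 hi2) = Rmin (clh a b hi1) (clh a b hi2).
Proof. intros. destruct hi1, hi2; simpl; clt. Qed.

Lemma sd_is a b f lo1 hi1 lo2 hi2 : a < b -> cont_on f a b ->
  is_RInt (gI f (symdiff (iv lo1 hi1) (iv lo2 hi2))) a b
    (V a b f lo1 hi1 + V a b f lo2 hi2 - 2 * V a b f (omax lo1 lo2) (omin hi1 hi2)).
Proof.
  intros Hab Hc.
  pose proof (is_RInt_plus _ _ _ _ _ _ (is_RInt_plus _ _ _ _ _ _ (iv_is a b f lo1 hi1 Hab Hc)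
    (iv_is a b f lo2 hi2 Hab Hc)) (is_RInt_scal _ _ _ (-2) _ (iv_is a b f (omax lo1 lo2) (omin hi1 hi2) Hab Hc))) as H.
  change (plus (plus (V a b f lo1 hi1) (V a b f lo2 hi2)) (scal (-2) (V a b f (omax lo1 lo2) (omin hi1 hi2))))
    with (V a b f lo1 hi1 + V a b f lo2 hi2 + (-2) * (V a b f (omax lo1 lo2) (omin hi1 hi2))) in H.
  replace (V a b f lo1 hi1 + V a b f lo2 hi2 - 2 * V a b f (omax lo1 lo2) (omin hi1 hi2)) with
    (V a b f lo1 hi1 + V a b f lo2 hi2 + (-2) * (V a b f (omax lo1 lo2) (omin hi1 hi2))) by ring.
  refine (@is_RInt_ext R_NormedModule _ _ a b _ _ H).
  intros x _. simpl. change (plus (plus (gI f (iv lo1 hi1) x) (gI f (iv lo2 hi2) x))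
     (scal (-2) (gI f (iv (omax lo1 lo2) (omin hi1 hi2)) x))) with
     (gI f (iv lo1 hi1) x + gI f (iv lo2 hi2) x + (-2) * gI f (iv (omax lo1 lo2) (omin hi1 hi2)) x).
  pose proof (iv_inter lo1 hi1 lo2 hi2 x).
  unfold gI, symdiff. repeat destruct excluded_middle_informative; try ring; exfalso; tauto.
Qed.


Lemma diag_val a b f lo1 hi1 lo2 hi2 : a < b -> cont_on f a b -> (forall x, 0 <= f x) ->
  Rmax (cll a b lo1) (cll a b lo2) <= Rmin (clh a b hi1) (clh a b hi2) ->
  V a b f lo1 hi1 + V a b f lo2 hi2 - 2 * V a b f (omax lo1 lo2) (omin hi1 hi2) =
  Rabs (Phi a b f (cll a b lo1) - Phi a b f (cll a b lo2)) +
  Rabs (Phi a b f (clh a b hi1) - Phi a b f (clh a b hi2)).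
Proof.
  intros Hab Hc Hp Hle. unfold V. rewrite cll_omax, clh_omin by lra.
  set (L1 := cll a b lo1) in *. set (L2 := cll a b lo2) in *.
  set (H1 := clh a b hi1) in *. set (H2 := clh a b hi2) in *.
  pose proof (Rmax_l L1 L2). pose proof (Rmax_r L1 L2). pose proof (Rmin_l H1 H2). pose proof (Rmin_r H1 H2).
  rewrite (Rmax_right L1 H1) by lra. rewrite (Rmax_right L2 H2) by lra.
  rewrite (Rmax_right (Rmax L1 L2) (Rmin H1 H2)) by lra.
  destruct (Rle_dec L1 L2) as [h1|h1]; destruct (Rle_dec H1 H2) as [h2|h2].
  - rewrite Rmax_right, Rmin_left by lra.
    pose proof (Phi_mono a b f L1 L2 ltac:(lra) Hc Hp h1). pose proof (Phi_mono a b f H1 H2 ltac:(lra) Hc Hp h2).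
    rewrite (Rabs_left1 (_ - _)) by lra. rewrite (Rabs_left1 (Phi a b f H1 - _)) by lra. ring.
  - rewrite Rmax_right, Rmin_right by lra.
    pose proof (Phi_mono a b f L1 L2 ltac:(lra) Hc Hp h1). pose proof (Phi_mono a b f H2 H1 ltac:(lra) Hc Hp ltac:(lra)).
    rewrite (Rabs_left1 (_ - _)) by lra. rewrite (Rabs_right (Phi a b f H1 - _)) by lra. ring.
  - rewrite Rmax_left, Rmin_left by lra.
    pose proof (Phi_mono a b f L2 L1 ltac:(lra) Hc Hp ltac:(lra)). pose proof (Phi_mono a b f H1 H2 ltac:(lra) Hc Hp h2).
    rewrite (Rabs_right (_ - _)) by lra. rewrite (Rabs_left1 (Phi a b f H1 - _)) by lra. ring.
  - rewrite Rmax_left, Rmin_right by lra.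
    pose proof (Phi_mono a b f L2 L1 ltac:(lra) Hc Hp ltac:(lra)). pose proof (Phi_mono a b f H2 H1 ltac:(lra) Hc Hp ltac:(lra)).
    rewrite (Rabs_right (_ - _)) by lra. rewrite (Rabs_right (Phi a b f H1 - _)) by lra. ring.
Qed.

Lemma core_le a b f A v p q : a < b -> cont_on f a b -> (forall x, 0 <= f x) -> a <= p <= q -> q <= b ->
  is_RInt (gI f A) a b v -> (forall x, p < x < q -> A x) -> Phi a b f q - Phi a b f p <= v.
Proof.
  intros Hab Hc Hp Hpq Hqb HA Hin.
  pose proof (iv_is a b f (Some p) (Some q) Hab Hc) as HK. unfold V in HK. simpl in HK.
  rewrite !clamp_id in HK by lra. rewrite Rmax_right in HK by lra.
  rewrite <- (is_RInt_unique _ _ _ _ HA). rewrite <- (is_RInt_unique _ _ _ _ HK).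
  apply RInt_le; [lra| eexists; exact HK| eexists; exact HA|].
  intros x Hx. unfold gI. destruct excluded_middle_informative as [[h1 h2]|h];
    destruct excluded_middle_informative as [h'|h']; simpl in *; auto; try lra.
  exfalso; apply h'; apply Hin; lra.
Qed.

Lemma distr_val a b f x : a < b -> cont_on f a b -> a <= x <= b -> distr_fun f a b x = Phi a b f x.
Proof.
  intros Hab Hc Hx. unfold distr_fun. apply Prob_of_is.
  assert (P1 : is_RInt (gI f (fun y => y <= x)) a x (Phi a b f x)).
  { apply (is_RInt_ext (fc a b f)).
    + intros y Hy. rewrite Rmin_left, Rmax_right in Hy by lra. unfold gI.
      destruct excluded_middle_informative as [h|h]; [|exfalso; lra].
      unfold fc. rewrite clamp_id by lra. reflexivity.
    + unfold Phi. apply (@RInt_correct R_CompleteNormedModule). apply fc_ex; [lra|exact Hc]. }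
  assert (P2 : is_RInt (gI f (fun y => y <= x)) x b 0).
  { apply is_RInt_zero_ext; [lra|]. intros y Hy. unfold gI.
    destruct excluded_middle_informative; [lra| reflexivity]. }
  pose proof (@is_RInt_Chasles R_NormedModule _ a x b _ _ P1 P2) as H.
  change (plus (Phi a b f x) 0) with (Phi a b f x + 0) in H. rewrite Rplus_0_r in H. exact H.
Qed.

Lemma zero_deriv g g' a b u v x : deriv_on g g' a b -> a <= u -> u < x < v -> v <= b ->
  (forall y, u < y < v -> g y = 0) -> g' x = 0.
Proof.
  intros H Hu Hx Hv H0.
  apply Rabs_eq_0. apply Rle_antisym; [|apply Rabs_pos].
  apply le_epsilon. intros eps He. rewrite Rplus_0_l.
  destruct (H x ltac:(lra) eps He) as [d [Hd Hd']].
  set (h := Rmin d (v - x) / 2).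
  assert (0 < Rmin d (v - x)) by (apply Rmin_glb_lt; lra).
  pose proof (Rmin_l d (v-x)). pose proof (Rmin_r d (v-x)).
  specialize (Hd' h ltac:(unfold h; lra) ltac:(rewrite Rabs_right; unfold h; lra) ltac:(unfold h; lra)).
  rewrite (H0 x) in Hd' by lra. rewrite (H0 (x + h)) in Hd' by (unfold h; lra).
  replace ((0 - 0) / h - g' x) with (- g' x) in Hd' by (field; unfold h; lra).
  rewrite Rabs_Ropp in Hd'. lra.
Qed.

Lemma pos_int a b f u v y : a <= b -> cont_on f a b -> (forall x, 0 <= f x) -> u < y < v ->
  0 < fc a b f y -> 0 < RInt (fc a b f) u v.
Proof.
  intros Hab Hc Hp Hy Hpos.
  destruct (cpt_to _ y (cont_clamp f a b Hab Hc y) (fc a b f y / 2) ltac:(lra)) as [d [Hd Hd']].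
  set (p := Rmax u (y - d/2)). set (q := Rmin v (y + d/2)).
  assert (Hpq : u <= p < q /\ q <= v) by (unfold p, q; clt).
  assert (E1 := RInt_Chasles (fc a b f) u p v (fc_ex a b f u p Hab Hc) (fc_ex a b f p v Hab Hc)).
  assert (E2 := RInt_Chasles (fc a b f) p q v (fc_ex a b f p q Hab Hc) (fc_ex a b f q v Hab Hc)).
  change plus with Rplus in E1, E2.
  assert (0 <= RInt (fc a b f) u p).
  { apply RInt_ge_0; [lra| apply fc_ex; assumption| intros; unfold fc; auto]. }
  assert (0 <= RInt (fc a b f) q v).
  { apply RInt_ge_0; [lra| apply fc_ex; assumption| intros; unfold fc; auto]. }
  assert (RInt (fun _ => fc a b f y / 2) p q <= RInt (fc a b f) p q).
  { apply RInt_le; [lra| apply ex_RInt_const| apply fc_ex; assumption|].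
    intros x Hx. assert (Rabs (x - y) < d) by (unfold p, q in Hx; unfold Rabs; destruct Rcase_abs; clt).
    specialize (Hd' x H1). apply Rabs_def2 in Hd'. cbv beta. unfold fc in *. lra. }
  rewrite RInt_const in H1. change (scal (q - p) (fc a b f y / 2)) with ((q - p) * (fc a b f y / 2)) in H1.
  assert (0 < (q - p) * (fc a b f y / 2)) by (apply Rmult_lt_0_compat; lra).
  lra.
Qed.

Lemma Phi_strict a b f f1 f2 u v : a < b -> cont_on f a b -> (forall x, 0 <= f x) ->
  deriv_on f f1 a b -> deriv_on f1 f2 a b ->
  (forall x, a < x < b -> f1 x = 0 -> f2 x <> 0) ->
  a <= u -> u < v -> v <= b -> Phi a b f u < Phi a b f v.
Proof.
  intros Hab Hc Hp Hd1 Hd2 Hnd Hu Huv Hv.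
  cut (0 < Phi a b f v - Phi a b f u); [lra|]. rewrite Phi_diff by (try lra; exact Hc).
  destruct (classic (exists y, u < y < v /\ 0 < f y)) as [[y [Hy Hfy]]|Hno].
  - apply (pos_int a b f u v y); try lra; auto. unfold fc. rewrite clamp_id by lra. exact Hfy.
  - exfalso.
    assert (Z0 : forall y, u < y < v -> f y = 0).
    { intros y Hy. destruct (Rle_lt_or_eq_dec 0 (f y) (Hp y)) as [h|h]; [|auto].
      exfalso; apply Hno; exists y; auto. }
    assert (Z1 : forall y, u < y < v -> f1 y = 0).
    { intros y Hy. apply (zero_deriv f f1 a b u v y Hd1 Hu Hy Hv Z0). }
    assert (Z2 : f2 ((u + v) / 2) = 0).
    { apply (zero_deriv f1 f2 a b u v ((u+v)/2) Hd2 Hu ltac:(lra) Hv Z1). }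
    apply (Hnd ((u+v)/2)); [lra| apply Z1; lra| exact Z2].
Qed.

Lemma clusters_len lo mu : length (clusters_from lo mu) = S (length mu).
Proof. revert lo; induction mu; intros; simpl; auto. Qed.

Definition lowc' (lo : option R) x := match lo with None => True | Some l => l < x end.
Definition highc' (hi : option R) x := match hi with None => True | Some h => x < h end.

Lemma clusters_nth lo mu k x d : (k <= length mu)%nat ->
  (nth k (clusters_from lo mu) d x <->
   lowc' (nth k (lo :: map Some mu) None) x /\ highc' (nth k (map Some mu) None) x).
Proof.
  revert lo k. induction mu as [|c mu IH]; intros lo k Hk.
  - simpl in Hk. assert (k = 0%nat) by lia. subst. simpl. destruct lo; simpl; tauto.
  - destruct k as [|k].
    + simpl. destruct lo; simpl; tauto.
    + simpl. simpl in Hk. rewrite IH by lia. reflexivity.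
Qed.

Lemma minR_le_In l w : In w l -> minR l <= w.
Proof.
  unfold minR. generalize (hd 0 l). intros d. induction l; simpl; intros H; [contradiction|].
  destruct H as [->|H]; [apply Rmin_l|]. eapply Rle_trans; [apply Rmin_r| auto].
Qed.

Lemma minR_ge l v : l <> [] -> (forall w, In w l -> v <= w) -> v <= minR l.
Proof.
  intros Hne H. unfold minR.
  assert (Hd : v <= hd 0 l) by (destruct l; [congruence| apply H; left; auto]).
  generalize dependent (hd 0 l). intros d Hd. clear Hne.
  induction l; simpl; auto. apply Rmin_glb; [apply H; left; auto| apply IHl; intros; apply H; right; auto].
Qed.

Lemma minR_eq l v : In v l -> (forall w, In w l -> v <= w) -> minR l = v.
Proof.
  intros Hin H. apply Rle_antisym; [apply minR_le_In; auto| apply minR_ge; auto].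
  intro E; subst; contradiction.
Qed.

Lemma inserts_prop {A} (x : A) l L : In L (inserts x l) ->
  length L = S (length l) /\ forall y, In y L -> y = x \/ In y l.
Proof.
  revert L. induction l as [|c l IH]; intros L H; simpl in H.
  - destruct H as [<-|[]]. simpl. split; auto. intros y [->|[]]; auto.
  - destruct H as [<-|H].
    + simpl. split; auto. intros y [->|[->|Hy]]; auto.
    + apply in_map_iff in H. destruct H as [L' [<- HL']]. destruct (IH L' HL') as [Hl Hy].
      simpl. split; [lia|]. intros y [->|Hin]; [right; left; auto|].
      destruct (Hy y Hin) as [h|h]; [left; auto| right; right; auto].
Qed.

Lemma perms_prop {A} (l : list A) L : In L (perms l) ->
  length L = length l /\ forall y, In y L -> In y l.
Proof.
  revert L. induction l as [|c l IH]; intros L H; simpl in H.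
  - destruct H as [<-|[]]. simpl; split; auto.
  - apply in_flat_map in H. destruct H as [L' [HL' HL]].
    destruct (IH L' HL') as [h1 h2]. destruct (inserts_prop c L' L HL) as [h3 h4].
    simpl. split; [lia|]. intros y Hy. destruct (h4 y Hy) as [->|h]; [left; auto| right; auto].
Qed.

Lemma perms_self {A} (l : list A) : In l (perms l).
Proof.
  induction l as [|c l IH]; simpl; [left; auto|].
  apply in_flat_map. exists l. split; auto. destruct l; simpl; auto.
Qed.

Lemma sumR_ge {A} (G : A -> R) l p0 : (forall p, In p l -> 0 <= G p) -> In p0 l -> G p0 <= sumR (map G l).
Proof.
  induction l as [|c l IH]; simpl; intros H Hin; [contradiction|].
  destruct Hin as [<-|Hin].
  - assert (0 <= sumR (map G l)).
    { clear IH. induction l; simpl; [lra|]. assert (0 <= G a) by (apply H; right; left; auto).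
      assert (0 <= sumR (map G l)) by (apply IHl; intros; apply H; simpl in *; intuition). lra. }
    lra.
  - assert (0 <= G c) by (apply H; left; auto). specialize (IH (fun p h => H p (or_intror h)) Hin). lra.
Qed.

Lemma sumR_nonneg {A} (G : A -> R) l : (forall p, In p l -> 0 <= G p) -> 0 <= sumR (map G l).
Proof.
  induction l; simpl; intros H; [lra|].
  assert (0 <= G a) by (apply H; left; auto). assert (0 <= sumR (map G l)) by (apply IHl; auto). lra.
Qed.

Lemma srt_nth (m : list R) i j : Sorted Rlt m -> (i < j)%nat -> (j < length m)%nat ->
  nth i m 0 < nth j m 0.
Proof.
  intros Hs. apply Sorted_StronglySorted in Hs; [|intros x y z; apply Rlt_trans].
  revert i j. induction Hs as [|c l Hs IH Hall]; intros i j Hij Hj; simpl in Hj; [lia|].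
  destruct i as [|i]; destruct j as [|j]; try lia.
  - simpl. rewrite Forall_forall in Hall. apply Hall. apply nth_In. lia.
  - simpl. apply IH; lia.
Qed.

Lemma nth_map_Some (l : list R) k : (k < length l)%nat -> nth k (map Some l) None = Some (nth k l 0).
Proof.
  intros H. rewrite <- (map_nth Some l 0 k). apply nth_indep. rewrite length_map; auto.
Qed.

Lemma nth_map_None (l : list R) k : (length l <= k)%nat -> nth k (map Some l) None = None.
Proof. intros. apply nth_overflow. rewrite length_map; auto. Qed.

Lemma gI_ext f A B : (forall x, A x <-> B x) -> gI f A = gI f B.
Proof.
  intros H. apply functional_extensionality. intros x.
  unfold gI. destruct excluded_middle_informative as [h|h]; destruct excluded_middle_informative as [h'|h'];
    auto; exfalso; firstorder.
Qed.

Definition SD a b f lo1 hi1 lo2 hi2 :=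
  V a b f lo1 hi1 + V a b f lo2 hi2 - 2 * V a b f (omax lo1 lo2) (omin hi1 hi2).

Lemma sd_gen a b f A B lo1 hi1 lo2 hi2 : a < b -> cont_on f a b ->
  (forall x, A x <-> iv lo1 hi1 x) -> (forall x, B x <-> iv lo2 hi2 x) ->
  is_RInt (gI f (symdiff A B)) a b (SD a b f lo1 hi1 lo2 hi2).
Proof.
  intros Hab Hc HA HB.
  rewrite (gI_ext f (symdiff A B) (symdiff (iv lo1 hi1) (iv lo2 hi2))).
  - apply sd_is; assumption.
  - intros x. unfold symdiff. rewrite HA, HB. tauto.
Qed.

Lemma cl_iv lo mu k d : (k <= length mu)%nat -> forall x,
  nth k (clusters_from lo mu) d x <-> iv (nth k (lo :: map Some mu) None) (nth k (map Some mu) None) x.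
Proof. intros Hk x. rewrite clusters_nth by exact Hk. reflexivity. Qed.

Definition Gt a b f (p : (R -> Prop) * (R -> Prop)) := Prob f a b (symdiff (fst p) (snd p)).

Lemma diag_sum a b f : a < b -> cont_on f a b -> (forall x, 0 <= f x) ->
  forall mh m lo1 lo2, length mh = length m ->
  (forall x, In x mh -> a <= x <= b) -> (forall x, In x m -> a <= x <= b) ->
  (forall k, (k <= length m)%nat ->
     Rmax (cll a b (nth k (lo1 :: map Some mh) None)) (cll a b (nth k (lo2 :: map Some m) None)) <=
     Rmin (clh a b (nth k (map Some mh) None)) (clh a b (nth k (map Some m) None))) ->
  sumR (map (Gt a b f) (combine (clusters_from lo1 mh) (clusters_from lo2 m))) =
  Rabs (Phi a b f (cll a b lo1) - Phi a b f (cll a b lo2)) +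
  2 * sumR (map (fun p => Rabs (Phi a b f (fst p) - Phi a b f (snd p))) (combine mh m)).
Proof.
  intros Hab Hc Hp. induction mh as [|h mh IH]; intros m lo1 lo2 Hlen Hmh Hm Hcond.
  - destruct m; [|simpl in Hlen; lia]. simpl.
    unfold Gt. simpl.
    rewrite (Prob_of_is f a b _ (SD a b f lo1 None lo2 None)).
    2:{ apply sd_gen; auto; intros x; unfold iv, lowc, highc; destruct lo1, lo2; simpl; tauto. }
    unfold SD. rewrite diag_val; auto.
    + simpl. rewrite Rminus_diag, Rabs_R0. ring.
    + apply (Hcond 0%nat). simpl; lia.
  - destruct m as [|c m]; [simpl in Hlen; lia|]. simpl in Hlen.
    assert (Hh : a <= h <= b) by (apply Hmh; left; auto).
    assert (Hcc : a <= c <= b) by (apply Hm; left; auto).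
    simpl combine. simpl map. simpl sumR.
    rewrite IH; auto.
    2:{ intros; apply Hmh; right; auto. }
    2:{ intros; apply Hm; right; auto. }
    2:{ intros k Hk. apply (Hcond (S k)). simpl; lia. }
    unfold Gt at 1. simpl fst. simpl snd.
    rewrite (Prob_of_is f a b _ (SD a b f lo1 (Some h) lo2 (Some c))).
    2:{ apply sd_gen; auto; intros x; unfold iv, lowc, highc; destruct lo1, lo2; simpl; tauto. }
    unfold SD. rewrite diag_val; auto.
    2:{ apply (Hcond 0%nat). simpl; lia. }
    simpl. rewrite !clamp_id by lra. ring.
Qed.


Lemma nth_am a (m : list R) k : nth (S k) (a :: m) 0 = nth k m 0.
Proof. reflexivity. Qed.

Lemma nth_mb b (m : list R) k : (k < length m)%nat -> nth k (m ++ [b]) 0 = nth k m 0.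
Proof. intros; apply app_nth1; auto. Qed.

Lemma nth_mb_last b (m : list R) : nth (length m) (m ++ [b]) 0 = b.
Proof. rewrite app_nth2 by lia. rewrite Nat.sub_diag. reflexivity. Qed.

Lemma idx_L a b (m mu : list R) eta : a < b -> length mu = length m -> 0 < eta ->
  (forall i, (i < length m)%nat -> Rabs (nth i mu 0 - nth i m 0) < eta) ->
  (forall x, In x mu -> a < x < b) ->
  forall k, (k <= length m)%nat ->
    (forall x, nth k (a :: m) 0 + eta < x -> lowc (nth k (None :: map Some mu) None) x) /\
    cll a b (nth k (None :: map Some mu) None) <= nth k (a :: m) 0 + eta.
Proof.
  intros Hab Hl He Hcl Hin k Hk. destruct k as [|k].
  - simpl. split; [auto| lra].
  - rewrite nth_am. simpl nth. rewrite nth_map_Some by lia.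
    specialize (Hcl k ltac:(lia)). apply Rabs_def2 in Hcl.
    assert (a < nth k mu 0 < b) by (apply Hin, nth_In; lia).
    split.
    + intros x Hx. simpl. lra.
    + simpl. rewrite clamp_id by lra. lra.
Qed.

Lemma idx_U a b (m mu : list R) eta : a < b -> length mu = length m -> 0 < eta ->
  (forall i, (i < length m)%nat -> Rabs (nth i mu 0 - nth i m 0) < eta) ->
  (forall x, In x mu -> a < x < b) ->
  forall k, (k <= length m)%nat ->
    (forall x, x < nth k (m ++ [b]) 0 - eta -> highc (nth k (map Some mu) None) x) /\
    nth k (m ++ [b]) 0 - eta <= clh a b (nth k (map Some mu) None).
Proof.
  intros Hab Hl He Hcl Hin k Hk. destruct (Nat.eq_dec k (length m)) as [->|Hne].
  - rewrite nth_mb_last. rewrite nth_map_None by lia. simpl. split; [auto| lra].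
  - rewrite nth_mb by lia. rewrite nth_map_Some by lia.
    specialize (Hcl k ltac:(lia)). apply Rabs_def2 in Hcl.
    assert (a < nth k mu 0 < b) by (apply Hin, nth_In; lia).
    split.
    + intros x Hx. simpl. lra.
    + simpl. rewrite clamp_id by lra. lra.
Qed.

Lemma sorted_le (m : list R) i j : Sorted Rlt m -> (i <= j)%nat -> (j < length m)%nat -> nth i m 0 <= nth j m 0.
Proof.
  intros Hs Hij Hj. destruct (Nat.eq_dec i j) as [->|Hne]; [lra|].
  apply Rlt_le, srt_nth; auto; lia.
Qed.

Lemma dP_main a b f m mh eta delta :
  a < b -> cont_on f a b -> (forall x, 0 <= f x) -> Sorted Rlt m -> length mh = length m ->
  (forall x, In x m -> a < x < b) -> (forall x, In x mh -> a < x < b) -> 0 < eta ->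
  (forall i, (i <= length m)%nat -> nth i (a :: m) 0 + 4 * eta <= nth i (m ++ [b]) 0) ->
  (forall i, (i < length m)%nat -> Rabs (nth i mh 0 - nth i m 0) < eta) ->
  (forall k, (k <= length m)%nat ->
     delta <= Phi a b f (nth k (m ++ [b]) 0 - eta) - Phi a b f (nth k (a :: m) 0 + eta)) ->
  2 * sumR (map (fun p => Rabs (Phi a b f (fst p) - Phi a b f (snd p))) (combine mh m)) < delta ->
  dP f a b (modal_clustering mh) (modal_clustering m) =
  sumR (map (fun p => Rabs (distr_fun f a b (fst p) - distr_fun f a b (snd p))) (combine mh m)).
Proof.
  intros Hab Hc Hp Hs Hlen Hm Hmh He Hgap Hcl Hcore Hsmall.
  set (n := length m) in *.
  assert (Hcm : forall i, (i < n)%nat -> Rabs (nth i m 0 - nth i m 0) < eta).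
  { intros. rewrite Rminus_diag, Rabs_R0; lra. }
  pose proof (idx_L a b m mh eta Hab Hlen He Hcl Hmh) as LH.
  pose proof (idx_L a b m m eta Hab eq_refl He Hcm Hm) as LM.
  pose proof (idx_U a b m mh eta Hab Hlen He Hcl Hmh) as UH.
  pose proof (idx_U a b m m eta Hab eq_refl He Hcm Hm) as UM.
  set (Ssum := sumR (map (fun p => Rabs (Phi a b f (fst p) - Phi a b f (snd p))) (combine mh m))) in *.
  assert (HR : sumR (map (fun p => Rabs (distr_fun f a b (fst p) - distr_fun f a b (snd p))) (combine mh m)) = Ssum).
  { unfold Ssum. f_equal. apply map_ext_in. intros [u v] Huv. simpl.
    pose proof (in_combine_l _ _ _ _ Huv). pose proof (in_combine_r _ _ _ _ Huv).
    specialize (Hmh u H). specialize (Hm v H0).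
    rewrite !distr_val by (try lra; exact Hc). reflexivity. }
  rewrite HR.
  set (C := clusters_from None mh). set (D := clusters_from None m).
  assert (HlC : length C = S n) by (unfold C; rewrite clusters_len; lia).
  assert (HlD : length D = S n) by (unfold D; rewrite clusters_len; lia).
  assert (HD : sumR (map (Gt a b f) (combine C D)) = 2 * Ssum).
  { unfold C, D. rewrite diag_sum; auto.
    - simpl. rewrite Rminus_diag, Rabs_R0. unfold Ssum. ring.
    - intros x Hx; specialize (Hmh x Hx); lra.
    - intros x Hx; specialize (Hm x Hx); lra.
    - intros k Hk. destruct (LH k Hk) as [_ h1]. destruct (LM k Hk) as [_ h2].
      destruct (UH k Hk) as [_ h3]. destruct (UM k Hk) as [_ h4]. specialize (Hgap k Hk).
      apply Rmax_lub; apply Rmin_glb; lra. }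
  unfold dP, modal_clustering. fold C. fold D. rewrite HlC, HlD, Nat.max_id.
  unfold pad. rewrite HlC, HlD, Nat.sub_diag. simpl repeat. rewrite !app_nil_r.
  assert (Hnn : 0 <= Ssum) by (unfold Ssum; apply sumR_nonneg; intros; apply Rabs_pos).
  rewrite (minR_eq _ (2 * Ssum)).
  - lra.
  - apply in_map_iff. exists D. split; [exact HD| apply perms_self].
  - intros w Hw. apply in_map_iff in Hw. destruct Hw as [L [<- HL]].
    destruct (perms_prop D L HL) as [HlenL HinL].
    destruct (classic (L = D)) as [->|Hne]; [rewrite <- HD; apply Rle_refl|].
    set (d := fun _ : R => False).
    assert (Hk : exists k, (k < S n)%nat /\ nth k L d <> nth k D d).
    { apply NNPP. intros H. apply Hne. apply nth_ext with (d := d) (d' := d); [congruence|].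
      intros k Hk. apply NNPP. intros H'. apply H. exists k. split; [lia| exact H']. }
    destruct Hk as [k [Hk Hkne]].
    assert (HinD : In (nth k L d) D) by (apply HinL, nth_In; lia).
    destruct (In_nth D _ d HinD) as [j [Hj Hjeq]].
    assert (Hjk : j <> k) by (intros ->; congruence).
    set (G := fun p : (R -> Prop) * (R -> Prop) => Prob f a b (symdiff (fst p) (snd p))).
    assert (HGe : G (nth k C d, nth k L d) <= sumR (map G (combine C L))).
    { apply sumR_ge.
      - intros p _. unfold G. apply Prob_nonneg; [lra| exact Hp].
      - rewrite <- combine_nth by congruence. apply nth_In. rewrite length_combine. lia. }
    assert (Hdel : delta <= G (nth k C d, nth k L d)).
    { unfold G. simpl. rewrite <- Hjeq.
      set (lo1 := nth k (None :: map Some mh) None). set (hi1 := nth k (map Some mh) None).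
      set (lo2 := nth j (None :: map Some m) None). set (hi2 := nth j (map Some m) None).
      assert (HIs := sd_gen a b f (nth k C d) (nth j D d) lo1 hi1 lo2 hi2 Hab Hc
        (cl_iv None mh k d ltac:(lia)) (cl_iv None m j d ltac:(lia))).
      rewrite (Prob_of_is _ _ _ _ _ HIs).
      eapply Rle_trans; [apply (Hcore k ltac:(lia))|].
      specialize (Hgap k ltac:(lia)).
      assert (Hak : a <= nth k (a :: m) 0).
      { destruct k; simpl; [lra|]. assert (a < nth k m 0 < b) by (apply Hm, nth_In; lia). lra. }
      assert (Hbk : nth k (m ++ [b]) 0 <= b).
      { destruct (Nat.eq_dec k n) as [->|hne]; [unfold n; rewrite nth_mb_last; lra|].
        rewrite nth_mb by lia. assert (a < nth k m 0 < b) by (apply Hm, nth_In; lia). lra. }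
      apply (core_le a b f _ _ (nth k (a :: m) 0 + eta) (nth k (m ++ [b]) 0 - eta) Hab Hc Hp ltac:(lra) ltac:(lra) HIs).
      intros x Hx. left. split.
      - apply (cl_iv None mh k d ltac:(lia)). split.
        + apply (proj1 (LH k ltac:(lia))). lra.
        + apply (proj1 (UH k ltac:(lia))). lra.
      - intros Hin'. apply (proj1 (cl_iv None m j d ltac:(lia) x)) in Hin'.
        unfold iv in Hin'. destruct Hin' as [h1 h2].
        destruct (Nat.lt_ge_cases k j) as [hkj|hkj].
        + (* j > k : lower bound of D_j is m_(j-1) >= m_k *)
          destruct j as [|j]; [lia|]. simpl in h1. rewrite nth_map_Some in h1 by lia. simpl in h1.
          rewrite nth_mb in Hx by lia.
          assert (nth k m 0 <= nth j m 0) by (apply sorted_le; auto; lia). lra.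
        +
          destruct k as [|k]; [lia|]. rewrite nth_am in Hx.
          rewrite nth_map_Some in h2 by lia. simpl in h2.
          assert (nth j m 0 <= nth k m 0) by (apply sorted_le; auto; lia). lra. }
    fold G. lra.
Qed.

Lemma list_pos (l : list R) (P : R -> R -> Prop) :
  (forall x r r', In x l -> 0 < r' <= r -> P x r -> P x r') ->
  (forall x, In x l -> exists r, 0 < r /\ P x r) -> exists r, 0 < r /\ forall x, In x l -> P x r.
Proof.
  induction l as [|c l IH]; intros Hmon Hex.
  - exists 1. split; [lra| intros x []].
  - destruct (Hex c (or_introl eq_refl)) as [r1 [Hr1 HP1]].
    destruct IH as [r2 [Hr2 HP2]].
    + intros x r r' Hx; apply Hmon; right; auto.
    + intros x Hx; apply Hex; right; auto.
    + exists (Rmin r1 r2). split; [apply Rmin_glb_lt; auto|].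
      pose proof (Rmin_l r1 r2). pose proof (Rmin_r r1 r2).
      assert (0 < Rmin r1 r2) by (apply Rmin_glb_lt; auto).
      intros x [<-|Hx].
      * apply (Hmon c r1); [left; auto| lra| auto].
      * apply (Hmon x r2); [right; auto| lra| auto].
Qed.

Lemma nat_pos (q : nat -> R) n : (forall k, (k <= n)%nat -> 0 < q k) ->
  exists d, 0 < d /\ forall k, (k <= n)%nat -> d <= q k.
Proof.
  induction n as [|n IH]; intros H.
  - exists (q 0%nat). split; [apply H; lia|]. intros k Hk. assert (k = 0%nat) by lia. subst; lra.
  - destruct IH as [d [Hd Hd']]. { intros; apply H; lia. }
    exists (Rmin d (q (S n))). split; [apply Rmin_glb_lt; auto; apply H; lia|].
    intros k Hk. destruct (Nat.eq_dec k (S n)) as [->|hne]; [apply Rmin_r|].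
    eapply Rle_trans; [apply Rmin_l| apply Hd'; lia].
Qed.

Lemma cpt_lip1 (phi g : R -> R) x : (forall u v, Rabs (phi u - phi v) <= Rabs (u - v)) ->
  continuity_pt g x -> continuity_pt (fun y => phi (g y)) x.
Proof.
  intros Hl Hg. apply cpt_of. intros eps He. destruct (cpt_to g x Hg eps He) as [d [Hd Hd']].
  exists d. split; auto. intros y Hy. eapply Rle_lt_trans; [apply Hl| apply Hd'; auto].
Qed.

Lemma cpt_lip2 (phi : R -> R -> R) g h x :
  (forall u v u' v', Rabs (phi u v - phi u' v') <= Rabs (u - u') + Rabs (v - v')) ->
  continuity_pt g x -> continuity_pt h x -> continuity_pt (fun y => phi (g y) (h y)) x.
Proof.
  intros Hl Hg Hh. apply cpt_of. intros eps He.
  destruct (cpt_to g x Hg (eps/2) ltac:(lra)) as [d1 [Hd1 Hd1']].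
  destruct (cpt_to h x Hh (eps/2) ltac:(lra)) as [d2 [Hd2 Hd2']].
  exists (Rmin d1 d2). split; [apply Rmin_glb_lt; auto|]. intros y Hy.
  pose proof (Rmin_l d1 d2). pose proof (Rmin_r d1 d2).
  eapply Rle_lt_trans; [apply Hl|].
  specialize (Hd1' y ltac:(lra)). specialize (Hd2' y ltac:(lra)). lra.
Qed.

Lemma cpt_idf (phi : R -> R) x : (forall u v, Rabs (phi u - phi v) <= Rabs (u - v)) -> continuity_pt phi x.
Proof.
  intros Hl. apply cpt_of. intros eps He. exists eps. split; auto. intros y Hy.
  eapply Rle_lt_trans; [apply Hl| auto].
Qed.

Lemma lip_Rmax u v u' v' : Rabs (Rmax u v - Rmax u' v') <= Rabs (u - u') + Rabs (v - v').
Proof. unfold Rmax; repeat destruct Rle_dec; unfold Rabs in *; repeat destruct Rcase_abs; lra. Qed.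
Lemma lip_plus u v u' v' : Rabs ((u + v) - (u' + v')) <= Rabs (u - u') + Rabs (v - v').
Proof. unfold Rabs; repeat destruct Rcase_abs; lra. Qed.
Lemma lip_abs u v : Rabs (Rabs u - Rabs v) <= Rabs (u - v).
Proof. unfold Rabs; repeat destruct Rcase_abs; lra. Qed.
Lemma lip_opp u v : Rabs (- u - - v) <= Rabs (u - v).
Proof. unfold Rabs; repeat destruct Rcase_abs; lra. Qed.
Lemma lip_bump r c u v : Rabs (Rmax 0 (r - Rabs (u - c)) - Rmax 0 (r - Rabs (v - c))) <= Rabs (u - v).
Proof. unfold Rmax; repeat destruct Rle_dec; unfold Rabs in *; repeat destruct Rcase_abs; lra. Qed.

Lemma cpt_sum (h : R -> R -> R) (l : list R) x : (forall c, continuity_pt (fun y => h c y) x) ->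
  continuity_pt (fun y => sumR (map (fun c => h c y) l)) x.
Proof.
  intros Hc. induction l as [|c l IH]; simpl.
  - apply cpt_idf. intros; rewrite Rminus_diag, Rabs_R0; apply Rabs_pos.
  - apply (cpt_lip2 Rplus (fun y => h c y) (fun y => sumR (map (fun c => h c y) l))); auto.
    apply lip_plus.
Qed.

Lemma sorted_map (g : R -> R) (l : list R) : Sorted Rlt l ->
  (forall x y, In x l -> In y l -> x < y -> g x < g y) -> Sorted Rlt (map g l).
Proof.
  induction l as [|c l IH]; intros Hs Hg; simpl; [constructor|].
  apply Sorted_inv in Hs. destruct Hs as [Hs Hd]. constructor.
  - apply IH; auto. intros; apply Hg; auto; right; auto.
  - destruct l as [|c' l]; simpl; constructor. inversion Hd. apply Hg; auto; [left|right;left]; auto.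
Qed.

Lemma combine_map_self (g : R -> R) (l : list R) : combine (map g l) l = map (fun x => (g x, x)) l.
Proof. induction l; simpl; congruence. Qed.

Lemma sumR_bound {A} (G : A -> R) l t : (forall p, In p l -> G p <= t) -> sumR (map G l) <= INR (length l) * t.
Proof.
  induction l as [|c l IH]; intros H; [simpl; lra|].
  change (sumR (map G (c :: l))) with (G c + sumR (map G l)).
  change (length (c :: l)) with (S (length l)). rewrite S_INR. assert (G c <= t) by (apply H; left; auto).
  assert (sumR (map G l) <= INR (length l) * t) by (apply IH; intros; apply H; right; auto). lra.
Qed.

Lemma local_unique a b g g1 g2 c r : deriv_on g g1 a b -> deriv_on g1 g2 a b ->
  0 < r -> a < c - r -> c + r < b -> g1 (c - r) < 0 -> 0 < g1 (c + r) ->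
  (forall x, c - r <= x <= c + r -> 0 < g2 x) ->
  exists z, c - r < z < c + r /\ g1 z = 0 /\ is_local_min g z /\
    forall y, c - r < y < c + r -> g1 y = 0 -> y = z.
Proof.
  intros H1 H2 Hr Ha Hb Hl Hu Hpos.
  assert (Hab : a <= b) by lra.
  assert (Hct : continuity (fun y => g1 (clamp a b y))).
  { intros x. apply cont_clamp; [exact Hab| apply (deriv_cont g1 g2); exact H2]. }
  assert (E1 : g1 (clamp a b (c - r)) = g1 (c - r)) by (rewrite clamp_id by lra; auto).
  assert (E2 : g1 (clamp a b (c + r)) = g1 (c + r)) by (rewrite clamp_id by lra; auto).
  destruct (IVT _ (c - r) (c + r) Hct ltac:(lra) ltac:(cbv beta; rewrite E1; lra) ltac:(cbv beta; rewrite E2; lra)) as [z [Hz Hz0]]. cbv beta in Hz0.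
  rewrite clamp_id in Hz0 by lra.
  assert (Hz' : c - r < z < c + r).
  { split; destruct (Req_dec z (c - r)); destruct (Req_dec z (c + r)); subst; try lra. }
  assert (Huniq : forall y, c - r < y < c + r -> g1 y = 0 -> y = z).
  { intros y Hy Hy0. destruct (Rtotal_order y z) as [h|[h|h]]; auto; exfalso.
    - assert (g1 y < g1 z) by (apply (strict_incr g1 g2 a b y z H2); try lra; intros; apply Hpos; lra). lra.
    - assert (g1 z < g1 y) by (apply (strict_incr g1 g2 a b z y H2); try lra; intros; apply Hpos; lra). lra. }
  exists z. split; [exact Hz'|]. split; [exact Hz0|]. split; [|exact Huniq].
  exists (Rmin (z - (c - r)) (c + r - z)). split; [apply Rmin_glb_lt; lra|].
  intros y Hy. pose proof (Rmin_l (z - (c - r)) (c + r - z)). pose proof (Rmin_r (z - (c - r)) (c + r - z)).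
  destruct (Rtotal_order y z) as [h|[h|h]].
  - rewrite Rabs_left in Hy by lra. apply Rlt_le.
    apply (strict_decr g g1 a b y z H1); try lra.
    intros x Hx. assert (g1 x < g1 z) by (apply (strict_incr g1 g2 a b x z H2); try lra; intros; apply Hpos; lra). lra.
  - subst; lra.
  - rewrite Rabs_right in Hy by lra. apply Rlt_le.
    apply (strict_incr g g1 a b z y H1); try lra.
    intros x Hx. assert (g1 z < g1 x) by (apply (strict_incr g1 g2 a b z x H2); try lra; intros; apply Hpos; lra). lra.
Qed.

Lemma bnd_lo a b (m : list R) k : a < b -> (forall x, In x m -> a < x < b) -> (k <= length m)%nat ->
  a <= nth k (a :: m) 0 < b.
Proof.
  intros Hab Hm Hk. destruct k; simpl; [lra|]. assert (a < nth k m 0 < b) by (apply Hm, nth_In; lia). lra.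
Qed.

Lemma bnd_hi a b (m : list R) k : a < b -> (forall x, In x m -> a < x < b) -> (k <= length m)%nat ->
  a < nth k (m ++ [b]) 0 <= b.
Proof.
  intros Hab Hm Hk. destruct (Nat.eq_dec k (length m)) as [->|hne]; [rewrite nth_mb_last; lra|].
  rewrite nth_mb by lia. assert (a < nth k m 0 < b) by (apply Hm, nth_In; lia). lra.
Qed.

Lemma gap_of a b (m : list R) r : a < b -> Sorted Rlt m -> a + 4 * r <= b ->
  (forall c, In c m -> a + 4 * r <= c /\ c + 4 * r <= b /\ (forall c', In c' m -> c < c' -> c + 4 * r <= c')) ->
  forall i, (i <= length m)%nat -> nth i (a :: m) 0 + 4 * r <= nth i (m ++ [b]) 0.
Proof.
  intros Hab Hs Hab4 H i Hi. destruct i as [|i].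
  - simpl nth at 1. destruct m as [|c m]; simpl; [lra|]. apply (H c (or_introl eq_refl)).
  - rewrite nth_am. assert (Hin : In (nth i m 0) m) by (apply nth_In; simpl in Hi; lia).
    destruct (H _ Hin) as [_ [h2 h3]].
    destruct (Nat.eq_dec (S i) (length m)) as [He|hne].
    + replace (S i) with (length m) by (symmetry; exact He). rewrite nth_mb_last. exact h2.
    + rewrite nth_mb by lia. apply h3; [apply nth_In; lia| apply srt_nth; auto; lia].
Qed.

Theorem mainTheorem3
  (a b : R) (f f1 f2 f3 : R -> R)
  (fh fh1 fh2 : nat -> R -> R) (m : list R)
  (Hab : a < b)
  (Hfpos : forall x, 0 <= f x)
  (Hfout : forall x, (x < a \/ b < x) -> f x = 0)
  (Hf1 : Prob f a b (fun _ => True) = 1)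
  (Hd1 : deriv_on f f1 a b) (Hd2 : deriv_on f1 f2 a b)
  (Hd3 : deriv_on f2 f3 a b) (Hc3 : cont_on f3 a b)
  (Hfa : f1 a <> 0) (Hfb : f1 b <> 0)
  (Hcrit_fin : exists l : list R, forall x, a < x < b -> f1 x = 0 -> In x l)
  (Hcrit_nd : forall x, a < x < b -> f1 x = 0 -> f2 x <> 0)
  (Hm_sorted : Sorted Rlt m)
  (Hm : forall x, In x m <-> (a < x < b /\ is_local_min f x))
  (Hhd1 : forall n, deriv_on (fh n) (fh1 n) a b)
  (Hhd2 : forall n, deriv_on (fh1 n) (fh2 n) a b)
  (Hhc2 : forall n, cont_on (fh2 n) a b)
  (Hconv1 : forall eps, 0 < eps -> exists N, forall n, (N <= n)%nat ->
              forall x, a <= x <= b -> Rabs (fh1 n x - f1 x) < eps)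
  (Hconv2 : forall eps, 0 < eps -> exists N, forall n, (N <= n)%nat ->
              forall x, a <= x <= b -> Rabs (fh2 n x - f2 x) < eps) :
  exists n0 : nat, forall n, (n0 <= n)%nat ->
    exists mh : list R,
      Sorted Rlt mh /\ length mh = length m /\
      (forall x, In x mh <-> (a < x < b /\ is_local_min (fh n) x)) /\
      dP f a b (modal_clustering mh) (modal_clustering m) =
        sumR (map (fun p => Rabs (distr_fun f a b (fst p) - distr_fun f a b (snd p)))
                  (combine mh m)).
Proof.
  assert (Hab' : a <= b) by lra.
  assert (Hc : cont_on f a b) by (apply (deriv_cont f f1); exact Hd1).
  assert (Hc1 : cont_on f1 a b) by (apply (deriv_cont f1 f2); exact Hd2).
  assert (Hc2 : cont_on f2 a b) by (apply (deriv_cont f2 f3); exact Hd3).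
  assert (Hmc : forall c, In c m -> a < c < b /\ f1 c = 0 /\ 0 < f2 c).
  { intros c Hcm. destruct (proj1 (Hm c) Hcm) as [Hcab Hlm].
    pose proof (local_min_d0 f f1 a b c Hd1 Hcab Hlm) as E.
    pose proof (Hcrit_nd c Hcab E). pose proof (local_min_d2 f f1 f2 a b c Hd1 Hd2 Hcab Hlm).
    split; [exact Hcab| split; [exact E| lra]]. }
  assert (Hmin : forall x, In x m -> a < x < b) by (intros x Hx; apply Hmc; exact Hx).
  assert (Hmconv : forall x, a < x < b -> f1 x = 0 -> 0 < f2 x -> In x m).
  { intros x Hx E P. apply Hm. split; [exact Hx|]. apply (d2_local_min f f1 f2 a b x Hd1 Hd2 Hx E P). }
  set (n := length m).
  destruct (list_pos m (fun c r => a + 4 * r <= c /\ c + 4 * r <= b /\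
       (forall c', In c' m -> c < c' -> c + 4 * r <= c') /\
       (forall x, a <= x <= b -> Rabs (x - c) <= r -> f2 c / 2 < f2 x))) as [r0 [Hr0 HP0]].
  { intros x r r' Hx Hr [h1 [h2 [h3 h4]]]. split; [lra| split; [lra| split]].
    - intros c' Hc' Hlt. specialize (h3 c' Hc' Hlt). lra.
    - intros y Hy Hyd. apply h4; auto. lra. }
  { intros c Hcm. destruct (Hmc c Hcm) as [Hcab [E P]].
    destruct (list_pos m (fun c' r => c < c' -> c + 4 * r <= c')) as [r1 [Hr1 HP1]].
    { intros x r r' Hx Hr h Hlt. specialize (h Hlt). lra. }
    { intros c' Hc'. destruct (Rlt_dec c c') as [hl|hl].
      - exists ((c' - c) / 4). split; [lra| intros; lra].
      - exists 1. split; [lra| intros; contradiction]. }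
    destruct (Hc2 c ltac:(lra) (f2 c / 2) ltac:(lra)) as [d [Hd Hd']].
    set (r := Rmin (Rmin r1 ((c - a) / 4)) (Rmin ((b - c) / 4) (d / 2))).
    pose proof (Rmin_l (Rmin r1 ((c - a) / 4)) (Rmin ((b - c) / 4) (d / 2))).
    pose proof (Rmin_r (Rmin r1 ((c - a) / 4)) (Rmin ((b - c) / 4) (d / 2))).
    pose proof (Rmin_l r1 ((c - a) / 4)). pose proof (Rmin_r r1 ((c - a) / 4)).
    pose proof (Rmin_l ((b - c) / 4) (d / 2)). pose proof (Rmin_r ((b - c) / 4) (d / 2)).
    assert (Hr : 0 < r) by (unfold r; repeat apply Rmin_glb_lt; lra).
    exists r. fold r in H, H0. split; [exact Hr|]. split; [lra| split; [lra| split]].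
    - intros c' Hc' Hlt. specialize (HP1 c' Hc' Hlt). lra.
    - intros x Hx Hxd. specialize (Hd' x Hx ltac:(lra)). apply Rabs_def2 in Hd'. lra. }
  set (rho0 := Rmin r0 ((b - a) / 4)).
  assert (Hrho0 : 0 < rho0) by (unfold rho0; apply Rmin_glb_lt; lra).
  assert (Hrho0r : rho0 <= r0) by apply Rmin_l.
  assert (Hrho0b : a + 4 * rho0 <= b) by (pose proof (Rmin_r r0 ((b - a) / 4)); unfold rho0; lra).
  assert (HP : forall c, In c m -> a + 4 * rho0 <= c /\ c + 4 * rho0 <= b /\
       (forall c', In c' m -> c < c' -> c + 4 * rho0 <= c') /\
       (forall x, a <= x <= b -> Rabs (x - c) <= rho0 -> f2 c / 2 < f2 x)).
  { intros c Hcm. destruct (HP0 c Hcm) as [h1 [h2 [h3 h4]]]. split; [lra| split; [lra| split]].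
    - intros c' Hc' Hlt. specialize (h3 c' Hc' Hlt). lra.
    - intros y Hy Hyd. apply h4; auto. lra. }
  assert (Hgap : forall i, (i <= length m)%nat -> nth i (a :: m) 0 + 4 * rho0 <= nth i (m ++ [b]) 0).
  { apply gap_of; auto. intros c Hcm. destruct (HP c Hcm) as [h1 [h2 [h3 _]]]. auto. }
  destruct (nat_pos (fun k => Phi a b f (nth k (m ++ [b]) 0 - rho0) - Phi a b f (nth k (a :: m) 0 + rho0)) n)
    as [delta [Hdelta Hdel]].
  { intros k Hk. cbv beta.
    pose proof (bnd_lo a b m k Hab Hmin Hk). pose proof (bnd_hi a b m k Hab Hmin Hk). pose proof (Hgap k Hk).
    assert (Phi a b f (nth k (a :: m) 0 + rho0) < Phi a b f (nth k (m ++ [b]) 0 - rho0)).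
    { apply (Phi_strict a b f f1 f2); auto; lra. }
    lra. }
  destruct (Phi_lip a b f Hab' Hc Hfpos) as [M [HM HMl]].
  set (rho := Rmin rho0 (delta / (4 * (INR n + 1) * M))).
  assert (Hn0 : 0 <= INR n) by apply pos_INR.
  assert (Hrho : 0 < rho) by (unfold rho; apply Rmin_glb_lt; [lra| apply Rdiv_lt_0_compat; [lra| nra]]).
  assert (Hrr : rho <= rho0) by apply Rmin_l.
  assert (Hrd : rho <= delta / (4 * (INR n + 1) * M)) by apply Rmin_r.
  destruct (list_pos m (fun c k => k <= f1 (c + rho) /\ k <= - f1 (c - rho) /\ k <= f2 c / 2)) as [k2 [Hk2 HK2]].
  { intros x r r' Hx Hr [h1 [h2 h3]]. lra. }
  { intros c Hcm. destruct (Hmc c Hcm) as [Hcab [E P]]. destruct (HP c Hcm) as [h1 [h2 [h3 h4]]].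
    assert (Hup : f1 c < f1 (c + rho)).
    { apply (strict_incr f1 f2 a b); auto; try lra. intros x Hx. pose proof (h4 x ltac:(lra)) as Q.
      assert (Q2 : Rabs (x - c) <= rho0) by (rewrite Rabs_right; lra). specialize (Q Q2). lra. }
    assert (Hlo : f1 (c - rho) < f1 c).
    { apply (strict_incr f1 f2 a b); auto; try lra. intros x Hx. pose proof (h4 x ltac:(lra)) as Q.
      assert (Q2 : Rabs (x - c) <= rho0) by (rewrite Rabs_left; lra). specialize (Q Q2). lra. }
    exists (Rmin (f1 (c + rho)) (Rmin (- f1 (c - rho)) (f2 c / 2))).
    pose proof (Rmin_l (f1 (c + rho)) (Rmin (- f1 (c - rho)) (f2 c / 2))).
    pose proof (Rmin_r (f1 (c + rho)) (Rmin (- f1 (c - rho)) (f2 c / 2))).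
    pose proof (Rmin_l (- f1 (c - rho)) (f2 c / 2)). pose proof (Rmin_r (- f1 (c - rho)) (f2 c / 2)).
    split; [repeat apply Rmin_glb_lt; lra| lra]. }
  set (Hf := fun x => Rmax (Rabs (f1 (clamp a b x))) (- f2 (clamp a b x)) +
                      sumR (map (fun c => Rmax 0 (rho - Rabs (x - c))) m)).
  assert (HfC : forall x, continuity_pt Hf x).
  { intros x. unfold Hf.
    apply (cpt_lip2 Rplus (fun x => Rmax (Rabs (f1 (clamp a b x))) (- f2 (clamp a b x)))
             (fun x => sumR (map (fun c => Rmax 0 (rho - Rabs (x - c))) m))); [apply lip_plus| |].
    - apply (cpt_lip2 Rmax (fun x => Rabs (f1 (clamp a b x))) (fun x => - f2 (clamp a b x))); [apply lip_Rmax| |].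
      + apply (cpt_lip1 Rabs (fun x => f1 (clamp a b x))); [apply lip_abs| apply cont_clamp; auto].
      + apply (cpt_lip1 Ropp (fun x => f2 (clamp a b x))); [apply lip_opp| apply cont_clamp; auto].
    - apply (cpt_sum (fun c y => Rmax 0 (rho - Rabs (y - c)))). intros c. apply cpt_idf. intros; apply lip_bump. }
  destruct (continuity_ab_min Hf a b Hab' (fun c _ => HfC c)) as [xm [Hxm Hxmab]].
  set (k1 := Hf xm).
  assert (Hsum0 : forall x, 0 <= sumR (map (fun c => Rmax 0 (rho - Rabs (x - c))) m)).
  { intros x. apply sumR_nonneg. intros; apply Rmax_l. }
  assert (Hk1 : 0 < k1).
  { unfold k1, Hf. rewrite clamp_id by lra. pose proof (Hsum0 xm).
    pose proof (Rmax_l (Rabs (f1 xm)) (- f2 xm)). pose proof (Rmax_r (Rabs (f1 xm)) (- f2 xm)).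
    destruct (Req_dec (f1 xm) 0) as [E|E].
    - assert (Hx' : a < xm < b).
      { split; destruct (Req_dec xm a); destruct (Req_dec xm b); subst; try lra; congruence. }
      pose proof (Hcrit_nd xm Hx' E).
      destruct (Rlt_or_le (f2 xm) 0) as [h|h]; [lra|].
      assert (Hin : In xm m) by (apply Hmconv; auto; lra).
      assert (rho <= sumR (map (fun c => Rmax 0 (rho - Rabs (xm - c))) m)).
      { pose proof (sumR_ge (fun c => Rmax 0 (rho - Rabs (xm - c))) m xm) as HH.
        cbv beta in HH. rewrite Rminus_diag, Rabs_R0, Rminus_0_r in HH.
        eapply Rle_trans; [|apply HH; auto; intros; apply Rmax_l]. apply Rmax_r. }
      pose proof (Rabs_pos (f1 xm)). lra.
    - pose proof (Rabs_pos_lt _ E). lra. }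
  assert (Hfar : forall x, a <= x <= b -> (forall c, In c m -> rho <= Rabs (x - c)) ->
            k1 <= Rmax (Rabs (f1 x)) (- f2 x)).
  { intros x Hx Hfc. pose proof (Hxm x Hx) as HH. fold k1 in HH. unfold Hf in HH.
    rewrite clamp_id in HH by lra.
    assert (sumR (map (fun c => Rmax 0 (rho - Rabs (x - c))) m) <= 0).
    { eapply Rle_trans; [apply (sumR_bound _ _ 0)|rewrite Rmult_0_r; lra].
      intros c Hcm. specialize (Hfc c Hcm). unfold Rmax; destruct Rle_dec; lra. }
    lra. }
  set (eps := Rmin (k1 / 2) k2).
  assert (Heps : 0 < eps) by (unfold eps; apply Rmin_glb_lt; lra).
  assert (Heps1 : eps <= k1 / 2) by apply Rmin_l.
  assert (Heps2 : eps <= k2) by apply Rmin_r.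
  destruct (Hconv1 eps Heps) as [N1 HN1]. destruct (Hconv2 eps Heps) as [N2 HN2].
  exists (Nat.max N1 N2). intros nn Hnn.
  specialize (HN1 nn ltac:(lia)). specialize (HN2 nn ltac:(lia)).
  assert (Hloc : forall c, In c m -> exists z, c - rho < z < c + rho /\ fh1 nn z = 0 /\ is_local_min (fh nn) z /\
      forall y, c - rho < y < c + rho -> fh1 nn y = 0 -> y = z).
  { intros c Hcm. destruct (Hmc c Hcm) as [Hcab [E P]]. destruct (HP c Hcm) as [h1 [h2 [h3 h4]]].
    destruct (HK2 c Hcm) as [q1 [q2 q3]].
    apply (local_unique a b (fh nn) (fh1 nn) (fh2 nn) c rho (Hhd1 nn) (Hhd2 nn)); auto; try lra.
    - specialize (HN1 (c - rho) ltac:(lra)). apply Rabs_def2 in HN1. lra.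
    - specialize (HN1 (c + rho) ltac:(lra)). apply Rabs_def2 in HN1. lra.
    - intros x Hx. specialize (HN2 x ltac:(lra)). apply Rabs_def2 in HN2.
      assert (Q2 : Rabs (x - c) <= rho0) by (unfold Rabs; destruct Rcase_abs; lra).
      specialize (h4 x ltac:(lra) Q2). lra. }
  set (sel := fun c => epsilon (inhabits 0) (fun z => c - rho < z < c + rho /\ fh1 nn z = 0)).
  assert (Hsel : forall c, In c m -> c - rho < sel c < c + rho /\ is_local_min (fh nn) (sel c) /\
      forall y, c - rho < y < c + rho -> fh1 nn y = 0 -> y = sel c).
  { intros c Hcm. destruct (Hloc c Hcm) as [z [Hz [Hz0 [Hzl Hzu]]]].
    assert (Hs := epsilon_spec (inhabits 0) (fun z => c - rho < z < c + rho /\ fh1 nn z = 0)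
                   (ex_intro _ z (conj Hz Hz0))).
    fold (sel c) in Hs. destruct Hs as [Hs1 Hs2].
    assert (sel c = z) by (apply Hzu; auto). rewrite H.
    split; [exact Hz| split; [exact Hzl|]]. intros y Hy Hy0. apply Hzu; auto. }
  assert (Hselab : forall c, In c m -> a < sel c < b).
  { intros c Hcm. destruct (Hsel c Hcm) as [[s1 s2] _]. destruct (HP c Hcm) as [h1 [h2 _]]. lra. }
  exists (map sel m).
  assert (HinS : forall x, In x (map sel m) <-> (a < x < b /\ is_local_min (fh nn) x)).
  { intros x. split.
    - intros Hx. apply in_map_iff in Hx. destruct Hx as [c [<- Hcm]].
      split; [apply Hselab; auto| apply (Hsel c Hcm)].
    - intros [Hx Hxl]. pose proof (local_min_d0 _ _ a b x (Hhd1 nn) Hx Hxl) as E.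
      pose proof (local_min_d2 _ _ _ a b x (Hhd1 nn) (Hhd2 nn) Hx Hxl) as E2.
      destruct (classic (exists c, In c m /\ Rabs (x - c) < rho)) as [[c [Hcm Hxc]]|Hno].
      + apply in_map_iff. exists c. split; [|exact Hcm]. symmetry.
        destruct (Hsel c Hcm) as [_ [_ Hu]]. apply Hu; auto.
        apply Rabs_def2 in Hxc. lra.
      + exfalso. assert (Hfar' := Hfar x ltac:(lra)).
        assert (H' : forall c, In c m -> rho <= Rabs (x - c)).
        { intros c Hcm. apply Rnot_lt_le. intros h. apply Hno. exists c; auto. }
        specialize (Hfar' H'). specialize (HN1 x ltac:(lra)). specialize (HN2 x ltac:(lra)).
        rewrite E in HN1. rewrite Rminus_0_l, Rabs_Ropp in HN1.
        apply Rabs_def2 in HN2.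
        revert Hfar'. unfold Rmax. destruct Rle_dec; intros; lra. }
  split; [|split; [apply length_map| split; [exact HinS|]]].
  - apply sorted_map; auto. intros x y Hx Hy Hxy.
    destruct (Hsel x Hx) as [[s1 s2] _]. destruct (Hsel y Hy) as [[s3 s4] _].
    destruct (HP x Hx) as [_ [_ [h3 _]]]. specialize (h3 y Hy Hxy). lra.
  - apply (dP_main a b f m (map sel m) rho0 delta); auto.
    + apply length_map.
    + intros x Hx. apply in_map_iff in Hx. destruct Hx as [c [<- Hcm]]. apply Hselab; auto.
    + intros i Hi. assert (Hin : In (nth i m 0) m) by (apply nth_In; lia).
      rewrite (nth_indep (map sel m) 0 (sel 0)) by (rewrite length_map; lia).
      rewrite map_nth. destruct (Hsel _ Hin) as [[s1 s2] _].
      unfold Rabs; destruct Rcase_abs; lra.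
    + rewrite combine_map_self, map_map. cbv beta. simpl fst. simpl snd.
      assert (Hb : sumR (map (fun x => Rabs (Phi a b f (sel x) - Phi a b f x)) m) <= INR n * (M * rho)).
      { apply sumR_bound. intros c Hcm. destruct (Hsel c Hcm) as [[s1 s2] _].
        eapply Rle_trans; [rewrite <- Rabs_Ropp; replace (- (Phi a b f (sel c) - Phi a b f c)) with
            (Phi a b f c - Phi a b f (sel c)) by ring; apply HMl|].
        apply Rmult_le_compat_l; [lra|]. unfold Rabs; destruct Rcase_abs; lra. }
      set (t := delta / (4 * (INR n + 1))).
      assert (Ht : 4 * (INR n + 1) * t = delta) by (unfold t; field; lra).
      assert (HMr : M * rho <= t).
      { unfold t. apply (Rmult_le_compat_l M) in Hrd; [|lra].
        replace (M * (delta / (4 * (INR n + 1) * M))) with (delta / (4 * (INR n + 1))) in Hrd by (field; lra).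
        exact Hrd. }
      assert (0 < t) by (unfold t; apply Rdiv_lt_0_compat; lra).
      assert (INR n * (M * rho) <= INR n * t) by (apply Rmult_le_compat_l; lra).
      nra.
Qed.
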